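(* Let $X\subseteq\mathbb{R}^d$ be compact, $\theta\in(0,1]$ and $0\leq s\leq d$. Then for all $0<r\leq1$ and every finite cover $\{U_i\}_i$ of $X$ by sets with $r\leq|U_i|\leq r^\theta$, \[ \sum_i|U_i|^s\ \geq\ r^s\,C_{r,\theta}^{s,d}(X). \]
   Context: $|U|$ denotes diameter. For $0\leq s\leq d$ and $0<r\leq1$, define on $\mathbb{R}^d$ the kernel $\phi_{r,\theta}^{s,d}(x)=1$ if $|x|<r$, $=(r/|x|)^s$ if $r\leq|x|<r^\theta$, and $=r^{\theta(d-s)+s}/|x|^d$ if $r^\theta\leq|x|$. For compact $X$, $C_{r,\theta}^{s,d}(X)=\big(\inf_\mu\iint\phi_{r,\theta}^{s,d}(x-y)\,d\mu(x)\,d\mu(y)\big)^{-1}$, the infimum taken over Borel probability measures $\mu$ supported on $X$. *)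

(* Defs.v *)
From HB Require Import structures.
From mathcomp Require Import all_boot all_order all_algebra.
From mathcomp Require Import all_classical all_reals all_analysis.
Import numFieldNormedType.Exports.
Set Implicit Arguments. Unset Strict Implicit. Unset Printing Implicit Defensive.
Import Order.TTheory GRing.Theory Num.Theory.
Local Open Scope classical_set_scope.
Local Open Scope ring_scope.

Definition enorm (R : realType) (d : nat) (x : 'rV[R]_d) : R :=
  Num.sqrt (\sum_(i < d) x ord0 i ^+ 2).

(* R^d equipped with its Borel sigma-algebra (generated by the open sets
   of the product = Euclidean topology). *)
Definition borelRd (R : realType) (d : nat) :=
  g_sigma_algebraType (@open 'rV[R]_d).

(* Diameter |U| := sup_{x,y in U} |x - y| (in the extended reals;
   -oo for the empty set, +oo for unbounded sets). *)
Definition diam (R : realType) (d : nat) (U : set 'rV[R]_d) : \bar R :=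
  ereal_sup [set (enorm (x - y))%:E | x in U & y in U].

Definition phi (R : realType) (d : nat) (s r theta : R) (x : 'rV[R]_d) : R :=
  if enorm x < r then 1
  else if enorm x < r `^ theta then (r / enorm x) `^ s
  else r `^ (theta * (d%:R - s) + s) / enorm x ^+ d.

Definition energy (R : realType) (d : nat) (s r theta : R)
  (mu : set (borelRd R d) -> \bar R) : \bar R :=
  (\int[mu]_x \int[mu]_y
     (phi s r theta ((x : 'rV[R]_d) - (y : 'rV[R]_d)))%:E)%E.

(* Infimum of the energies over Borel probability measures supported on X
   (i.e. giving zero mass to the complement of X). *)
Definition min_energy (R : realType) (d : nat) (s r theta : R)
  (X : set 'rV[R]_d) : \bar R :=
  ereal_inf [set e | exists mu : probability (borelRd R d) R,
     mu (~` X) = 0%E /\ e = energy s r theta mu].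

(* C_{r,theta}^{s,d}(X) = (inf_mu energy)^{-1}, with the convention
   (+oo)^{-1} = 0 (only occurs when X is empty). *)
Definition capacity (R : realType) (d : nat) (s r theta : R)
  (X : set 'rV[R]_d) : R :=
  match min_energy s r theta X with
  | EFin e => e^-1
  | _ => 0
  end.

(* Main.v *)
Require Import Defs.
From HB Require Import structures.
From mathcomp Require Import all_boot all_order all_algebra.
From mathcomp Require Import all_classical all_reals all_analysis.
From mathcomp Require Import ring lra.
Import numFieldNormedType.Exports.
Import Order.TTheory GRing.Theory Num.Theory.
Local Open Scope classical_set_scope.
Local Open Scope ring_scope.
Lemma le_int0 d (T : measurableType d) (R : realType) (mu : {measure set T -> \bar R})
  (f g : T -> \bar R) : (forall x, (0 <= f x)%E) -> (forall x, (f x <= g x)%E) ->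
  (\int[mu]_x f x <= \int[mu]_x g x)%E.
Proof.
move=> f0 fg.
have g0 x : (0 <= g x)%E by apply: le_trans (fg x).
rewrite (ge0_integralTE mu f0) (ge0_integralTE mu g0) /=.
apply: ereal_sup_le => z [h hf <-]; exists h => //= x.
exact: le_trans (hf x) (fg x).
Qed.

Lemma sum_cont (R : realType) (T : topologicalType) (I : Type) (s : seq I)
  (f : I -> T -> R) : (forall i, continuous (f i)) ->
  continuous (fun x => \sum_(i <- s) f i x).
Proof.
move=> fc; elim: s => [|a s IH].
  under eq_fun do rewrite big_nil; exact: cst_continuous.
under eq_fun do rewrite big_cons.
move=> x; apply: cvgD; [exact: fc|exact: IH].
Qed.

Lemma enorm_cont (R : realType) (d : nat) : continuous (@enorm R d).
Proof.
move=> x; rewrite /enorm.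
apply: (@continuous_comp _ _ _ (fun x : 'rV[R]_d => \sum_(i < d) x ord0 i ^+ 2) Num.sqrt).
  apply: sum_cont => i; under eq_fun do rewrite expr2.
  by move=> y; exact: (cvgM (@coord_continuous R 1 d ord0 i y) (@coord_continuous R 1 d ord0 i y)).
exact: sqrt_continuous.
Qed.

Lemma closure_min (T : topologicalType) (A C : set T) :
  closed C -> A `<=` C -> closure A `<=` C.
Proof. by move=> cC AC; rewrite (closure_id C).1 //; exact: closureS. Qed.

Lemma enormB_cont (R : realType) (d : nat) (v : 'rV[R]_d) :
  continuous (fun x : 'rV[R]_d => enorm (x - v)).
Proof.
move=> x; apply: (@continuous_comp _ _ _ (fun x : 'rV[R]_d => x - v) (@enorm R d)).
  exact: (cvgB (cvg_id) (cvg_cst v)).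
exact: enorm_cont.
Qed.

Lemma enormN (R : realType) (d : nat) (v : 'rV[R]_d) : enorm (- v) = enorm v.
Proof. by rewrite /enorm; congr Num.sqrt; apply: eq_bigr => i _; rewrite mxE sqrrN. Qed.

Lemma closure_dist (R : realType) (d : nat) (U : set 'rV[R]_d) (D : R) :
  (forall u v, U u -> U v -> enorm (u - v) <= D) ->
  forall x y, closure U x -> closure U y -> enorm (x - y) <= D.
Proof.
move=> HU.
have H1 v : U v -> closure U `<=` [set x | enorm (x - v) <= D].
  move=> Uv; apply: closure_min => [|u Uu]; last exact: HU.
  apply: (@preimage_closed _ _ (fun x : 'rV[R]_d => enorm (x - v)) [set t | t <= D]).
    by move=> z _; exact: enormB_cont.
  exact: closed_le.
move=> x y cx cy.
have : closure U `<=` [set z | enorm (x - z) <= D].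
  apply: closure_min => [|u Uu]; last exact: H1.
  have -> : [set z | enorm (x - z) <= D] = (fun z => enorm (z - x)) @^-1` [set t | t <= D].
    by apply/seteqP; split => z /=; rewrite -opprB enormN.
  apply: preimage_closed; last exact: closed_le.
  by move=> z _; exact: enormB_cont.
by apply.
Qed.
Lemma phi_lb (R : realType) (d : nat) (s r theta D : R) (x : 'rV[R]_d) :
  0 < r -> 0 <= s -> r <= D -> D <= r `^ theta -> enorm x <= D ->
  (r / D) `^ s <= phi s r theta x.
Proof.
move=> r0 s0 rD Dt xD.
have D0 : 0 < D by apply: lt_le_trans rD.
have rD1 : r / D <= 1 by rewrite ler_pdivrMr // mul1r.
have rD0 : 0 <= r / D by rewrite divr_ge0 // ltW.
rewrite /phi; case: ifPn => [_|].
  have -> : (1:R) = 1 `^ s by rewrite powR1.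
  by apply: ge0_ler_powR; rewrite ?nnegrE.
rewrite -leNgt => rx.
have x0 : 0 < enorm x by apply: lt_le_trans rx.
case: ifPn => [_|].
  apply: ge0_ler_powR => //; rewrite ?nnegrE //.
    by rewrite divr_ge0 // ltW.
  by rewrite ler_pdivlMr // mulrAC ler_pdivrMr // ler_pM2l.
rewrite -leNgt => tx.
have xe : enorm x = r `^ theta by apply/eqP; rewrite eq_le tx (le_trans xD Dt).
have De : D = r `^ theta by apply/eqP; rewrite eq_le Dt -xe xD.
rewrite xe De.
suff -> : (r / r `^ theta) `^ s = r `^ (theta * (d%:R - s) + s) / r `^ theta ^+ d by [].
have rt0 : 0 < r `^ theta by exact: powR_gt0.
apply: ln_inj; rewrite ?posrE.
- by apply: powR_gt0; rewrite divr_gt0.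
- by rewrite divr_gt0 ?powR_gt0 // exprn_gt0.
rewrite ln_powR ln_div ?posrE // ln_div ?posrE ?powR_gt0 ?exprn_gt0 //.
rewrite lnXn // !ln_powR -mulr_natr.
ring.
Qed.
Lemma cs_ineq (R : realFieldType) n (p q c w : 'I_n -> R) (rho : R) :
  0 < rho -> (forall i, 0 <= p i) -> (forall i, p i <= q i) ->
  (forall i, 0 < c i) -> (forall i, c i * w i = rho) ->
  1 <= \sum_i p i -> 0 < \sum_i w i ->
  rho / \sum_i w i <= \sum_i c i * q i * p i.
Proof.
move=> rho0 p0 pq c0 cw sp sw.
set S := \sum_i w i; set lam := rho / S.
have lam0 : 0 < lam by rewrite divr_gt0.
have term i : 2 * lam * p i - lam ^+ 2 * w i / rho <= c i * q i * p i.
  set t := lam ^+ 2 * w i / rho.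
  have ct : c i * t = lam ^+ 2.
    have -> : c i * t = lam ^+ 2 * (c i * w i) / rho by rewrite /t; ring.
    by rewrite cw mulfK // gt_eqF.
  have cp : c i * p i * p i <= c i * q i * p i.
    by rewrite ler_wpM2r // ler_wpM2l // ltW.
  have e : c i * (c i * p i * p i - 2 * lam * p i + t) = (c i * p i - lam) ^+ 2.
    by rewrite mulrDr ct; ring.
  have : 0 <= c i * p i * p i - 2 * lam * p i + t.
    by rewrite -(pmulr_rge0 _ (c0 i)) e sqr_ge0.
  lra.
have := ler_sum (index_enum _) (fun i (_ : true) => term i).
rewrite big_split /= sumrN -mulr_sumr -mulr_suml -mulr_sumr -/S.
have -> : lam ^+ 2 * S / rho = lam.
  rewrite /lam; field; rewrite ?gt_eqF //.
move=> h; apply: le_trans h.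
have : lam <= lam * \sum_i p i by rewrite ler_peMr // ltW.
lra.
Qed.
Lemma closed_meas (R : realType) (d : nat) (A : set 'rV[R]_d) :
  closed A -> measurable (A : set (borelRd R d)).
Proof.
move=> cA; rewrite -[A]setCK; apply: measurableC.
by apply: sub_sigma_algebra; exact: closed_openC.
Qed.

Lemma int_scaled_indic d (T : measurableType d) (R : realType)
  (mu : {measure set T -> \bar R}) (k : R) (A : set T) :
  0 <= k -> measurable A ->
  (\int[mu]_x (k * \1_A x)%:E = k%:E * mu A)%E.
Proof.
move=> k0 mA.
under eq_integral do rewrite EFinM.
rewrite ge0_integralZl_EFin //.
- by rewrite integral_indic // setIT.
by apply/measurable_realfun.measurable_EFinP; exact: measurable_realfun.measurable_indic.
Qed.

Lemma phi_ge0 (R : realType) (d : nat) (s r theta : R) (x : 'rV[R]_d) :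
  0 <= phi s r theta x.
Proof.
rewrite /phi; case: ifP => _ //; case: ifP => _; first exact: powR_ge0.
by rewrite divr_ge0 ?powR_ge0 // exprn_ge0 // sqrtr_ge0.
Qed.

Lemma energy_lb (R : realType) (d : nat) (X : set 'rV[R]_d) (theta s r : R)
  (n : nat) (U : 'I_n -> set 'rV[R]_d) (mu : probability (borelRd R d) R) :
  closed X -> 0 <= s -> 0 < r ->
  X `<=` \bigcup_(i in [set: 'I_n]) U i ->
  (forall i, (r%:E <= diam (U i))%E /\ (diam (U i) <= (r `^ theta)%:E)%E) ->
  mu (~` X) = 0%E ->
  0 < \sum_(i < n) (fine (diam (U i))) `^ s /\
  ((r `^ s / \sum_(i < n) (fine (diam (U i))) `^ s)%:E <= energy s r theta mu)%E.
Proof.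
move=> cX s0 r0 XU hU muX.
set D := fun i => fine (diam (U i)).
have DE i : diam (U i) = (D i)%:E.
  have [h1 h2] := hU i; rewrite /D fineK // fin_numElt.
  by rewrite (lt_le_trans (ltNyr r) h1) (le_lt_trans h2 (ltry _)).
have rD i : r <= D i /\ D i <= r `^ theta.
  by have [h1 h2] := hU i; move: h1 h2; rewrite DE !lee_fin.
have Dpos i : 0 < D i by apply: lt_le_trans r0 (rD i).1.
have dU i u v : U i u -> U i v -> enorm (u - v) <= D i.
  move=> Uu Uv; rewrite -lee_fin -DE; apply: ereal_sup_ubound.
  by exists u => //; exists v.
set V := fun i => closure (U i).
have dV i x y : V i x -> V i y -> enorm (x - y) <= D i.
  move=> Vx Vy; exact: (@closure_dist R d (U i) (D i) (dU i) x y Vx Vy).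
have mV i : measurable (V i : set (borelRd R d)).
  apply: closed_meas; exact: closed_closure.
pose F : nat -> set 'rV[R]_d := fun k => oapp V set0 (insub k).
have FE (i : 'I_n) : F i = V i by rewrite /F valK.
have mF k : measurable (F k : set (borelRd R d)).
  by rewrite /F; case: insub => //=.
pose A := fun i : 'I_n => seqDU F i.
have AV i : A i `<=` V i by move=> x [] + _; rewrite FE.
have mA i : measurable (A i : set (borelRd R d)).
  by apply: measurableD => //; exact: bigsetU_measurable.
have Adisj i j x : A i x -> A j x -> i = j.
  move=> Ai Aj; apply: val_inj; apply: (trivIset_seqDU F) => //.
  by exists x.
have tA : trivIset setT A by move=> i j _ _ [x [Ai Aj]]; exact: Adisj Ai Aj.
have XB : X `<=` \big[setU/set0]_(i < n) A i.
  move=> x Xx; have [i _ Uix] := XU x Xx.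
  rewrite /A -bigsetU_seqDU -bigcup_mkord; exists (val i) => //=.
  by rewrite FE; exact: subset_closure.
have mB : measurable (\big[setU/set0]_(i < n) A i : set (borelRd R d)).
  exact: bigsetU_measurable.
have sumA : (\sum_(i < n) mu (A i) = mu (\big[setU/set0]_(i < n) A i))%E.
  by rewrite measure_semi_additive_ord.
have B1 : mu (\big[setU/set0]_(i < n) A i) = 1%E.
  set B := \big[setU/set0]_(i < n) A i in XB mB sumA *.
  have mBC : mu (~` B) = 0%E.
    apply/eqP; rewrite eq_le measure_ge0 andbT -muX; apply: le_measure.
    - by rewrite inE; exact: measurableC.
    - by rewrite inE; apply: measurableC; exact: closed_meas.
    - exact: subsetC.
  have := probability_setT mu.
  have -> : [set: borelRd R d] = B `|` ~` B by rewrite setUv.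
  rewrite measureU //; last exact: setICr.
    move=> <-; apply/esym; rewrite -[RHS]adde0; congr (_ + _); exact: mBC.
  apply: measurableC; exact: mB.
pose p i := fine (mu (A i)).
pose q i := fine (mu (V i)).
have finmu (Y : set (borelRd R d)) : measurable Y -> mu Y = (fine (mu Y))%:E.
  move=> mY; rewrite fineK // ge0_fin_numE //.
  by apply: le_lt_trans (probability_le1 mu mY) (ltry _).
have pE i : mu (A i) = (p i)%:E by exact: finmu.
have qE i : mu (V i) = (q i)%:E by exact: finmu.
have p0 i : 0 <= p i by rewrite -lee_fin -pE.
have pq i : p i <= q i.
  rewrite -lee_fin -pE -qE; apply: le_measure; rewrite ?inE //; exact: AV.
have q0 i : 0 <= q i by apply: le_trans (pq i).
have sp : \sum_i p i = 1.
  apply: EFin_inj; rewrite -sumEFin -B1 -sumA; apply: eq_bigr => i _.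
  by rewrite pE.
pose c i := (r / D i) `^ s.
have c0 i : 0 < c i by apply: powR_gt0; rewrite divr_gt0.
have cw i : c i * D i `^ s = r `^ s.
  by rewrite /c -powRM ?divfK ?gt_eqF // ?divr_ge0 // ltW.
have Gle : (\int[mu]_x (\sum_(i < n) ((c i * q i) * \1_(A i) x)%:E)
    <= energy s r theta mu)%E.
  rewrite /energy; apply: le_int0.
    move=> x; apply: sume_ge0 => i _.
    by rewrite lee_fin indicE mulr_ge0 // mulr_ge0 // ltW.
  move=> x; case: (pselect (exists j, A j x)) => [[j Ajx]|nA]; last first.
    rewrite big1; first by apply: integral_ge0 => y _; rewrite lee_fin phi_ge0.
    move=> i _; rewrite indicE memNset ?mulr0 //.
    by move=> Aix; apply: nA; exists i.
  rewrite (bigD1 j) //= big1 ?adde0; last first.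
    move=> i ij; rewrite indicE memNset ?mulr0 //.
    by move=> Aix; move: ij; rewrite (Adisj _ _ _ Aix Ajx) eqxx.
  rewrite indicE mem_set // mulr1 EFinM -qE -int_scaled_indic //; last exact: ltW.
  apply: le_int0 => y.
    by rewrite lee_fin indicE mulr_ge0 // ltW.
  rewrite lee_fin indicE; case: (pselect (V j y)) => Vy.
    rewrite mem_set // mulr1; apply: phi_lb => //; try exact: (rD j).1; try exact: (rD j).2.
    exact: dV (AV _ _ Ajx) Vy.
  by rewrite memNset // mulr0 phi_ge0.
have Gval : (\int[mu]_x (\sum_(i < n) ((c i * q i) * \1_(A i) x)%:E)
    = (\sum_i c i * q i * p i)%:E)%E.
  rewrite ge0_integral_sum //.
  - rewrite -sumEFin; apply: eq_bigr => i _.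
    rewrite int_scaled_indic //; first by rewrite [in RHS]EFinM; f_equal; exact: pE.
    by rewrite mulr_ge0 // ltW.
  - move=> i; apply/measurable_realfun.measurable_EFinP.
    apply: measurable_realfun.measurable_funM => //; exact: measurable_realfun.measurable_indic.
  - by move=> i x _; rewrite lee_fin indicE mulr_ge0 // mulr_ge0 // ltW.
have [[i0 _]|ni] := pselect (exists i : 'I_n, True); last first.
  have : \sum_i p i = 0 by apply: big1 => i _; case: ni; exists i.
  by rewrite sp => /eqP; rewrite oner_eq0.
have Spos : 0 < \sum_(i < n) D i `^ s.
  rewrite (bigD1 i0) //=; apply: ltr_pwDl; first exact: powR_gt0.
  by apply: sumr_ge0 => i _; exact: powR_ge0.
split => //.
apply: le_trans Gle; rewrite Gval lee_fin.
apply: (@cs_ineq _ n p q c (fun i => D i `^ s) (r `^ s)) => //.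
- exact: powR_gt0.
- by rewrite sp.
Qed.

Theorem lemma5p2 (R : realType) (d : nat) (X : set 'rV[R]_d)
  (theta s : R) :
  compact X -> 0 < theta -> theta <= 1 -> 0 <= s -> s <= d%:R ->
  forall r : R, 0 < r -> r <= 1 ->
  forall (n : nat) (U : 'I_n -> set 'rV[R]_d),
    X `<=` \bigcup_(i in [set: 'I_n]) U i ->
    (forall i, (r%:E <= diam (U i))%E /\ (diam (U i) <= (r `^ theta)%:E)%E) ->
    r `^ s * capacity s r theta X <= \sum_(i < n) (fine (diam (U i))) `^ s.
Proof.
move=> cX th0 th1 s0 sd r r0 r1 n U XU hU.
have clX : closed X by apply: compact_closed => //; exact: norm_hausdorff.
have S0 : 0 <= \sum_(i < n) (fine (diam (U i))) `^ s.
  by apply: sumr_ge0 => i _; exact: powR_ge0.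
rewrite /capacity /min_energy.
set E := [set e | _].
have lbE e : E e -> 0 < \sum_(i < n) (fine (diam (U i))) `^ s /\
    ((r `^ s / \sum_(i < n) (fine (diam (U i))) `^ s)%:E <= e)%E.
  by move=> [mu [muX ->]]; exact: (@energy_lb R d X theta s r n U mu clX s0 r0 XU hU muX).
have [[e0 Ee0]|nE] := pselect (exists e, E e); last first.
  have -> : E = set0 by apply/seteqP; split => // e Ee; apply: nE; exists e.
  by rewrite ereal_inf0 mulr0.
have Spos := (lbE e0 Ee0).1.
have lb : ((r `^ s / \sum_(i < n) (fine (diam (U i))) `^ s)%:E <= ereal_inf E)%E.
  by apply/ereal_infP => y Ey; exact: (lbE y Ey).2.
case: (ereal_inf E) lb => [e| |] //; last by rewrite mulr0.
rewrite lee_fin => le.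
have rs0 : 0 < r `^ s by exact: powR_gt0.
have e0' : 0 < e by apply: lt_le_trans le; rewrite divr_gt0.
rewrite -[r `^ s * e^-1]/(r `^ s / e) ler_pdivrMr //.
by rewrite ler_pdivrMr // mulrC in le.
Qed.
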